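(* Let $\bm\mu=(\mu_1,\dots,\mu_r)$ be finite positive Borel measures on the unit circle with infinite supports and let $\bm n,\bm m\in\mathbb N^r$. The following are equivalent: (a) $(\bm n,\bm m)$ is normal, i.e. there is a unique $\Phi\in\operatorname{span}\{z^p\}_{p=-|\bm m|}^{|\bm n|}$ with coefficient of $z^{|\bm n|}$ equal to $1$ satisfying $\int\Phi(w)w^{-p}\,d\mu_j(w)=0$ for $p=-m_j,\dots,n_j-1$, $j=1,\dots,r$; (b) there is no nonzero $\Phi\in\operatorname{span}\{z^p\}_{p=-|\bm m|}^{|\bm n|-1}$ satisfying the orthogonality relations in (a); (c) there is a unique $\Phi^*\in\operatorname{span}\{z^p\}_{p=-|\bm m|}^{|\bm n|}$ with coefficient of $z^{-|\bm m|}$ equal to $1$ satisfying $\int\Phi^*(w)w^{-p}\,d\mu_j(w)=0$ for $p=-m_j+1,\dots,n_j$, $j=1,\dots,r$; (d) there is no nonzero $\Phi^*\in\operatorname{span}\{z^p\}_{p=-|\bm m|+1}^{|\bm n|}$ satisfying the orthogonality relations in (c).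
   Context: $|\bm n|=n_1+\dots+n_r$ for $\bm n=(n_1,\dots,n_r)$ with non-negative integer entries; $\operatorname{span}\{z^p\}_{p=a}^b$ denotes the span of the monomials $z^a,z^{a+1},\dots,z^b$ (integer exponents). *)

(* Defs.v *)
From HB Require Import structures.
From mathcomp Require Import all_boot all_order all_algebra.
From mathcomp Require Import all_classical all_reals all_analysis.
From mathcomp Require Import complex.
Set Implicit Arguments. Unset Strict Implicit. Unset Printing Implicit Defensive.
Import Order.TTheory GRing.Theory Num.Theory.
Import numFieldNormedType.Exports.
Local Open Scope classical_set_scope.
Local Open Scope ring_scope.

(* The plane R^2 = R * R (with the product Borel sigma-algebra) models C;
   a measure on the unit circle is a measure on R * R carried by the circle. *)

Definition unit_circle (R : realType) : set (R * R) :=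
  [set p | p.1 ^+ 2 + p.2 ^+ 2 = 1].

Definition toC (R : realType) (p : R * R) : R[i] := Complex p.1 p.2.

Definition on_circle (R : realType) (mu : {measure set (R * R)%type -> \bar R}) :=
  mu (~` @unit_circle R) = 0%E.

Definition msupport (R : realType) (mu : {measure set (R * R)%type -> \bar R}) :
  set (R * R) :=
  [set x | forall e : R, 0 < e -> (0 < mu (ball x e))%E].

Definition cintegral (R : realType) (mu : {measure set (R * R)%type -> \bar R})
  (f : R * R -> R[i]) : R[i] :=
  Complex (Rintegral mu setT (fun w => complex.Re (f w)))
          (Rintegral mu setT (fun w => complex.Im (f w))).

(* Laurent polynomial z^a * P(z): elements of span{z^p}_{p=a}^{b} are exactly
   these with size P <= b - a + 1 *)
Definition lpoly (R : realType) (a : int) (P : {poly R[i]}) (z : R[i]) : R[i] :=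
  z ^ a * P.[z].

Definition sumn_vec (r : nat) (n : 'I_r -> nat) : nat := (\sum_(j < r) n j)%N.

Definition orth_typeI (R : realType) (r : nat)
  (mu : 'I_r -> {measure set (R * R)%type -> \bar R}) (n m : 'I_r -> nat)
  (Phi : R[i] -> R[i]) : Prop :=
  forall (j : 'I_r) (p : int), - (m j)%:Z <= p <= (n j)%:Z - 1 ->
    cintegral (mu j) (fun w => Phi (toC w) * toC w ^ (- p)) = 0.

Definition orth_typeII (R : realType) (r : nat)
  (mu : 'I_r -> {measure set (R * R)%type -> \bar R}) (n m : 'I_r -> nat)
  (Phi : R[i] -> R[i]) : Prop :=
  forall (j : 'I_r) (p : int), - (m j)%:Z + 1 <= p <= (n j)%:Z ->
    cintegral (mu j) (fun w => Phi (toC w) * toC w ^ (- p)) = 0.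

(* Main.v *)
Require Import Defs.
From HB Require Import structures.
From mathcomp Require Import all_boot all_order all_algebra.
From mathcomp Require Import all_classical all_reals all_analysis.
From mathcomp Require Import complex.
From mathcomp Require Import ring lra zify.
Set Implicit Arguments. Unset Strict Implicit. Unset Printing Implicit Defensive.
Import Order.TTheory GRing.Theory Num.Theory.
Import numFieldNormedType.Exports.
Local Open Scope classical_set_scope.
Local Open Scope ring_scope.


Lemma LA (F : fieldType) (T : finType) (K : nat) (hT : #|T| = K)
  (L : T -> {poly F} -> F)
  (LD : forall t P Q, L t (P + Q) = L t P + L t Q)
  (LZ : forall t a P, L t (a *: P) = a * L t P)
  (B : 'I_K -> {poly F}) (E : {poly F})
  (Binj : forall x : 'rV[F]_K, \sum_i x 0 i *: B i = 0 -> x = 0)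
  (G : {poly F} -> Prop)
  (hG : forall P, G P <-> exists x : 'rV[F]_K, P = E + \sum_i x 0 i *: B i) :
  (exists! P, G P /\ forall t, L t P = 0) <->
  (forall x : 'rV[F]_K, (forall t, L t (\sum_i x 0 i *: B i) = 0) -> x = 0).
Proof.
have L0 t : L t 0 = 0.
  by have h := LD t 0 0; rewrite addr0 in h; apply: (addrI (L t 0)); rewrite addr0 -h.
have LN t P : L t (- P) = - L t P.
  by rewrite -scaleN1r LZ mulN1r.
have Lsum t (x : 'rV[F]_K) : L t (\sum_i x 0 i *: B i) = \sum_i x 0 i * L t (B i).
  rewrite (big_morph (L t) (LD t) (L0 t)); apply: eq_bigr => i _; exact: LZ.
have embD (x y : 'rV[F]_K) : \sum_i (x + y) 0 i *: B i =
    \sum_i x 0 i *: B i + \sum_i y 0 i *: B i.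
  by rewrite -big_split; apply: eq_bigr => i _; rewrite mxE scalerDl.
have embB (x y : 'rV[F]_K) : \sum_i (x - y) 0 i *: B i =
    \sum_i x 0 i *: B i - \sum_i y 0 i *: B i.
  rewrite -sumrB; apply: eq_bigr => i _; rewrite !mxE scalerBl //.
split.
- move=> [P0 [[/hG [x0 ->] H0] U]] x Hx.
  have h1 : G (E + \sum_i x0 0 i *: B i + \sum_i x 0 i *: B i).
    by apply/hG; exists (x0 + x); rewrite embD addrA.
  have h2 : forall t, L t (E + \sum_i x0 0 i *: B i + \sum_i x 0 i *: B i) = 0.
    by move=> t; rewrite LD H0 Hx addr0.
  have h := U _ (conj h1 h2).
  by apply: Binj; apply: (addrI (E + \sum_i x0 0 i *: B i)); rewrite addr0; exact: esym h.
- move=> Hinj.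
  pose A : 'M[F]_(K, #|T|) := \matrix_(i, s) L (enum_val s) (B i).
  have xA (x : 'rV[F]_K) s : (x *m A) 0 s = L (enum_val s) (\sum_i x 0 i *: B i).
    by rewrite Lsum mxE; apply: eq_bigr => i _; rewrite mxE.
  have rfA : row_free A.
    rewrite -kermx_eq0; apply/eqP/row_matrixP => i; rewrite row0.
    apply: Hinj => t.
    rewrite -[t]enum_rankK -xA -row_mul mulmx_ker row0 mxE //.
  have /row_fullP [D HD] : row_full A.
    by rewrite /row_full; move/eqP: rfA => ->; rewrite hT.
  pose b : 'rV[F]_#|T| := \row_s (- L (enum_val s) E).
  pose x := b *m D.
  have HxA : x *m A = b by rewrite /x -mulmxA HD mulmx1.
  exists (E + \sum_i x 0 i *: B i); split.
    split; first by apply/hG; exists x.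
    move=> t; rewrite LD -[t]enum_rankK -xA HxA mxE subrr //.
  move=> P [/hG [y ->] Hy].
  have : x - y = 0.
    apply: Hinj => t; rewrite embB LD LN.
    have hy : L t (\sum_i y 0 i *: B i) = - L t E.
      by apply/eqP; rewrite -subr_eq0 opprK addrC -LD Hy.
    rewrite hy -[t]enum_rankK -xA HxA mxE enum_rankK subrr //.
  by move/eqP; rewrite subr_eq0 => /eqP ->.
Qed.

Lemma ex1_iff (A : Type) (P Q : A -> Prop) :
  (forall x, P x <-> Q x) -> (exists! x, P x) <-> (exists! x, Q x).
Proof.
move=> h; split => [[x [/h px u]]|[x [/h px u]]]; exists x; split => // y /h; exact: u.
Qed.

Section Emb.
Variables (F : fieldType) (K : nat).
Definition emb (x : 'rV[F]_K) : {poly F} := \sum_(i < K) x 0 i *: 'X^i.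

Lemma emb_coef x j (hj : (j < K)%N) : (emb x)`_j = x 0 (Ordinal hj).
Proof.
rewrite /emb coef_sum; under eq_bigr do rewrite coefZ coefXn.
rewrite (bigD1 (Ordinal hj)) //= eqxx mulr1 big1 ?addr0 // => i ne.
case: eqP => [ji|]; last by rewrite mulr0.
by exfalso; move/eqP: ne; apply; apply: val_inj => /=; rewrite ji.
Qed.

Lemma emb_coef_ge x j : (K <= j)%N -> (emb x)`_j = 0.
Proof.
move=> hj; rewrite /emb coef_sum big1 // => i _; rewrite coefZ coefXn.
case: eqP => [ji|]; last by rewrite mulr0.
by move: (ltn_ord i); rewrite -ji ltnNge hj.
Qed.

Lemma emb_inj x : emb x = 0 -> x = 0.
Proof.
move=> h; apply/rowP => i; rewrite mxE.
have := congr1 (fun p : {poly F} => p`_i) h; rewrite (emb_coef _ (ltn_ord i)) coef0.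
by have -> : Ordinal (ltn_ord i) = i by apply: val_inj.
Qed.

Lemma emb_size x : (size (emb x) <= K)%N.
Proof. by apply/leq_sizeP => j hj; rewrite emb_coef_ge. Qed.

Lemma emb_row (P : {poly F}) : (size P <= K)%N -> emb (\row_i P`_i) = P.
Proof.
move=> hP; apply/polyP => j; case: (ltnP j K) => hj.
  by rewrite (emb_coef _ hj) mxE.
by rewrite emb_coef_ge // nth_default // (leq_trans hP hj).
Qed.

Lemma emb_size_bound (P : {poly F}) : (size P <= K)%N -> exists x, P = emb x.
Proof. by move=> hP; exists (\row_i P`_i); rewrite emb_row. Qed.

Lemma embD x y : emb (x + y) = emb x + emb y.
Proof. by rewrite /emb -big_split; apply: eq_bigr => i _; rewrite mxE scalerDl. Qed.
End Emb.

Section LAT.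
Variables (F : fieldType) (T : finType) (K : nat) (hT : #|T| = K)
  (L : T -> {poly F} -> F)
  (LD : forall t P Q, L t (P + Q) = L t P + L t Q)
  (LZ : forall t a P, L t (a *: P) = a * L t P).

Lemma LA_top :
  (exists! P : {poly F}, [/\ (size P <= K + 1)%N, P`_K = 1 & forall t, L t P = 0]) <->
  (forall x : 'rV[F]_K, (forall t, L t (emb x) = 0) -> x = 0).
Proof.
rewrite (@ex1_iff _ _ (fun P : {poly F} => ((size P <= K + 1)%N /\ P`_K = 1) /\ forall t, L t P = 0));
  last by move=> P; split => [[a b c]|[[a b] c]].
apply: (@LA F T K hT L LD LZ (fun i => 'X^i) 'X^K (@emb_inj F K)) => P; split.
- move=> [hs hc].
  have hs' : (size (P - 'X^K)%R <= K)%N.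
    apply/leq_sizeP => j hj; rewrite coefB coefXn.
    case: (ltngtP j K) => [|hjK|->]; first by rewrite ltnNge hj.
      by rewrite nth_default ?subr0 // (leq_trans hs) // addn1.
    by rewrite hc subrr.
  have [x hx] := emb_size_bound hs'; exists x.
  by rewrite -[LHS](subrK 'X^K) hx addrC.
- move=> [x ->]; split.
    rewrite (leq_trans (size_polyD _ _)) // geq_max size_polyXn addn1 leqnn /=.
    by rewrite (leq_trans (emb_size x)) // addn1.
  by rewrite coefD coefXn eqxx (@emb_coef_ge _ _ x) // addr0.
Qed.

Lemma LA_bot :
  (exists! P : {poly F}, [/\ (size P <= K + 1)%N, P`_0 = 1 & forall t, L t P = 0]) <->
  (forall x : 'rV[F]_K, (forall t, L t (emb x * 'X) = 0) -> x = 0).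
Proof.
have eX (x : 'rV[F]_K) : \sum_i x 0 i *: 'X^(i.+1) = emb x * 'X.
  by rewrite /emb mulr_suml; apply: eq_bigr => i _; rewrite -scalerAl exprSr.
rewrite (@ex1_iff _ _ (fun P : {poly F} => ((size P <= K + 1)%N /\ P`_0 = 1) /\ forall t, L t P = 0));
  last by move=> P; split => [[a b c]|[[a b] c]].
have bi : forall x : 'rV[F]_K, \sum_i x 0 i *: 'X^(i.+1) = 0 -> x = 0.
  by move=> x; rewrite eX => /eqP; rewrite mulf_eq0 polyX_eq0 orbF => /eqP /emb_inj.
have hG : forall P : {poly F}, (size P <= K + 1)%N /\ P`_0 = 1 <->
    exists x : 'rV[F]_K, P = 1 + \sum_i x 0 i *: 'X^(i.+1).
  move=> P; split.
  - move=> [hs hc]; exists (\row_i P`_(i.+1)); rewrite eX.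
    apply/polyP => j; rewrite coefD coefC coefMX.
    case: j => [|l] /=; first by rewrite hc addr0.
    rewrite add0r; case: (ltnP l K) => hl.
      by rewrite (emb_coef _ hl) mxE.
    by rewrite emb_coef_ge // nth_default // (leq_trans hs) // addn1.
  - move=> [x ->]; rewrite eX; split.
      rewrite (leq_trans (size_polyD _ _)) // geq_max size_polyC addn1.
      rewrite (leq_trans (leq_b1 _)) //=.
      have [->|nz] := eqVneq (emb x) 0; first by rewrite mul0r size_poly0.
      by rewrite size_mulX // ltnS emb_size.
    by rewrite coefD coefC coefMX /= addr0.
apply: iff_trans (@LA F T K hT L LD LZ (fun i => 'X^(i.+1)) 1 bi _ hG) _.
split => H x hx; apply: H => t; [rewrite eX | rewrite -eX]; exact: hx t.
Qed.
End LAT.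




Section Meas.
Variable R : realType.

Lemma ReM (x y : R[i]) : complex.Re (x * y) = complex.Re x * complex.Re y - complex.Im x * complex.Im y.
Proof. by case: x => a b; case: y => c d /=. Qed.
Lemma ImM (x y : R[i]) : complex.Im (x * y) = complex.Re x * complex.Im y + complex.Im x * complex.Re y.
Proof. by case: x => a b; case: y => c d /=. Qed.
Lemma ReD (x y : R[i]) : complex.Re (x + y) = complex.Re x + complex.Re y.
Proof. by case: x => a b; case: y => c d /=. Qed.
Lemma ImD (x y : R[i]) : complex.Im (x + y) = complex.Im x + complex.Im y.
Proof. by case: x => a b; case: y => c d /=. Qed.
Lemma ReV (x : R[i]) : complex.Re (x^-1) = complex.Re x / (complex.Re x ^+ 2 + complex.Im x ^+ 2).
Proof. by case: x => a b /=. Qed.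
Lemma ImV (x : R[i]) : complex.Im (x^-1) = - (complex.Im x / (complex.Re x ^+ 2 + complex.Im x ^+ 2)).
Proof. by case: x => a b /=. Qed.

Lemma measurable_inv : measurable_fun [set: R] (@GRing.inv R).
Proof.
have -> : [set: R] = [set r | r != 0] `|` [set 0].
  apply/seteqP; split=> x //= _; case: (eqVneq x 0) => [->|h]; [by right|by left].
have mD : measurable [set r : R | r != 0] by apply: measurable_realfun.open_measurable; exact: open_neq.
apply/(measurable_funU _ mD (measurable_set1 0)); split; last exact: measurable_fun_set1.
apply: measurable_realfun.open_continuous_measurable_fun; first exact: open_neq.
by move=> x; rewrite inE /= => x0; exact: inv_continuous.
Qed.

Definition cmeas (f : R * R -> R[i]) :=
  measurable_fun setT (fun w => complex.Re (f w)) /\ measurable_fun setT (fun w => complex.Im (f w)).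

Lemma cmeas_toC : cmeas (fun w => toC w).
Proof. split; [exact: measurable_fst | exact: measurable_snd]. Qed.

Lemma cmeas_cst c : cmeas (fun _ => c).
Proof. by split. Qed.

Lemma cmeasD f g : cmeas f -> cmeas g -> cmeas (fun w => f w + g w).
Proof.
move=> [f1 f2] [g1 g2]; split.
  under eq_fun do rewrite ReD; exact: measurable_realfun.measurable_funD.
under eq_fun do rewrite ImD; exact: measurable_realfun.measurable_funD.
Qed.

Lemma cmeasM f g : cmeas f -> cmeas g -> cmeas (fun w => f w * g w).
Proof.
move=> [f1 f2] [g1 g2]; split.
  under eq_fun do rewrite ReM; apply: measurable_realfun.measurable_funB; exact: measurable_realfun.measurable_funM.
under eq_fun do rewrite ImM; apply: measurable_realfun.measurable_funD; exact: measurable_realfun.measurable_funM.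
Qed.

Lemma cmeasV f : cmeas f -> cmeas (fun w => (f w)^-1).
Proof.
move=> [f1 f2].
have hd : measurable_fun setT (fun w => (complex.Re (f w) ^+ 2 + complex.Im (f w) ^+ 2)^-1).
  apply: (measurableT_comp measurable_inv).
  by apply: measurable_realfun.measurable_funD; apply: measurable_realfun.measurable_funX.
split.
  under eq_fun do rewrite ReV; exact: measurable_realfun.measurable_funM.
under eq_fun do rewrite ImV; apply: measurableT_comp => //; exact: measurable_realfun.measurable_funM.
Qed.

Lemma cmeasX f n : cmeas f -> cmeas (fun w => f w ^+ n).
Proof.
move=> hf; elim: n => [|n IH]; first by under eq_fun do rewrite expr0; exact: cmeas_cst.
under eq_fun do rewrite exprS; exact: cmeasM.
Qed.

Lemma cmeasXz f (k : int) : cmeas f -> cmeas (fun w => f w ^ k).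
Proof.
move=> hf; case: k => n.
  exact: cmeasX.
rewrite /exprz; apply: cmeasV; exact: cmeasX.
Qed.


Lemma circ_meas : measurable (@unit_circle R).
Proof.
have mh : measurable_fun setT (fun p : (R * R)%type => p.1 ^+ 2 + p.2 ^+ 2).
  by apply: measurable_realfun.measurable_funD; apply: measurable_realfun.measurable_funX;
    [exact: measurable_fst | exact: measurable_snd].
have := mh measurableT [set 1] (measurable_set1 1).
by rewrite setTI.
Qed.

Section Int.
Variable mu : {measure set (R * R)%type -> \bar R}.
Hypothesis hfin : (mu setT < +oo)%E.
Hypothesis hcirc : on_circle mu.

Lemma CE : setT `\` ~` @unit_circle R = @unit_circle R.
Proof. by rewrite setTD setCK. Qed.

Lemma integ (g : (R * R)%type -> R) (mg : measurable_fun setT g) (B : R)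
  (hb : forall w, @unit_circle R w -> `|g w| <= B) : mu.-integrable setT (EFin \o g).
Proof.
have mN : measurable (~` @unit_circle R) by apply: measurableC; exact: circ_meas.
rewrite (negligible_integrable mN measurableT) //; last exact/measurable_realfun.measurable_EFinP.
rewrite CE.
apply: (le_integrable circ_meas (g := EFin \o cst B)).
- apply/measurable_realfun.measurable_EFinP; apply: measurable_funS mg => //.
- move=> w Cw /=; rewrite lee_fin; apply: le_trans (hb _ Cw) _.
  exact: ler_norm.
apply/integrableP; split; first exact/measurable_realfun.measurable_EFinP.
rewrite /= integral_cst //=; last exact: circ_meas.
apply: lte_mul_pinfty => //; apply: le_lt_trans hfin.
by apply: le_measure; rewrite ?inE //; exact: circ_meas.
Qed.

Lemma mN : measurable (~` @unit_circle R).
Proof. by apply: measurableC; exact: circ_meas. Qed.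

Lemma Rint_circ (g : (R * R)%type -> R) (mg : measurable_fun setT g) (B : R)
  (hb : forall w, unit_circle w -> `|g w| <= B) :
  Rintegral mu setT g = Rintegral mu (@unit_circle R) g.
Proof.
by rewrite /Rintegral (negligible_integral mN measurableT (integ mg hb) hcirc) CE.
Qed.

Definition good (f : (R * R)%type -> R[i]) := cmeas f /\
  exists B, forall w, unit_circle w -> `|complex.Re (f w)| + `|complex.Im (f w)| <= B.

Lemma cplx_eq (x y : R[i]) : complex.Re x = complex.Re y -> complex.Im x = complex.Im y -> x = y.
Proof. by case: x => a b; case: y => c d /= -> ->. Qed.

Lemma integ_Re f (a : R) : good f -> mu.-integrable setT (EFin \o (fun w => a * complex.Re (f w))).
Proof.
move=> [[m1 m2] [B hB]]; apply: (@integ _ _ (`|a| * B)).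
  exact: measurable_realfun.measurable_funM.
move=> w Cw; rewrite normrM; apply: ler_wpM2l => //.
have := hB w Cw; have := normr_ge0 (complex.Im (f w)); lra.
Qed.

Lemma integ_Im f (a : R) : good f -> mu.-integrable setT (EFin \o (fun w => a * complex.Im (f w))).
Proof.
move=> [[m1 m2] [B hB]]; apply: (@integ _ _ (`|a| * B)).
  exact: measurable_realfun.measurable_funM.
move=> w Cw; rewrite normrM; apply: ler_wpM2l => //.
have := hB w Cw; have := normr_ge0 (complex.Re (f w)); lra.
Qed.

Lemma integ_Re1 f : good f -> mu.-integrable setT (EFin \o (fun w => complex.Re (f w))).
Proof.
move=> hf; have := integ_Re 1 hf; apply: eq_integrable => // w _ /=; by rewrite mul1r.
Qed.

Lemma integ_Im1 f : good f -> mu.-integrable setT (EFin \o (fun w => complex.Im (f w))).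
Proof.
move=> hf; have := integ_Im 1 hf; apply: eq_integrable => // w _ /=; by rewrite mul1r.
Qed.

Lemma cint_circ f g : good f -> good g -> (forall w, unit_circle w -> f w = g w) ->
  cintegral mu f = cintegral mu g.
Proof.
move=> [[f1 f2] [B hB]] [[g1 g2] [B' hB']] fg.
have bR (h : (R * R)%type -> R[i]) B0 : (forall w, unit_circle w ->
   `|complex.Re (h w)| + `|complex.Im (h w)| <= B0) ->
   forall w, unit_circle w -> `|complex.Re (h w)| <= B0.
  by move=> hh w Cw; have := hh w Cw; have := normr_ge0 (complex.Im (h w)); lra.
have bI (h : (R * R)%type -> R[i]) B0 : (forall w, unit_circle w ->
   `|complex.Re (h w)| + `|complex.Im (h w)| <= B0) ->
   forall w, unit_circle w -> `|complex.Im (h w)| <= B0.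
  by move=> hh w Cw; have := hh w Cw; have := normr_ge0 (complex.Re (h w)); lra.
rewrite /cintegral (Rint_circ f1 (bR _ _ hB)) (Rint_circ f2 (bI _ _ hB)).
rewrite (Rint_circ g1 (bR _ _ hB')) (Rint_circ g2 (bI _ _ hB')).
by congr Complex; apply: eq_Rintegral => w; rewrite inE => Cw; rewrite fg.
Qed.

Lemma cint_add f g : good f -> good g ->
  cintegral mu (fun w => f w + g w) = cintegral mu f + cintegral mu g.
Proof.
move=> hf hg; apply: cplx_eq; rewrite ?ReD ?ImD /cintegral /=.
  under eq_Rintegral do rewrite ReD.
  by rewrite RintegralD //; [exact: integ_Re1 | exact: integ_Re1].
under eq_Rintegral do rewrite ImD.
by rewrite RintegralD //; [exact: integ_Im1 | exact: integ_Im1].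
Qed.

Lemma cint_scale c f : good f ->
  cintegral mu (fun w => c * f w) = c * cintegral mu f.
Proof.
move=> hf; apply: cplx_eq; rewrite ?ReM ?ImM /cintegral /=.
  under eq_Rintegral do rewrite ReM.
  rewrite RintegralB //; [|exact: integ_Re | exact: integ_Im].
  by rewrite !RintegralZl //; [exact: integ_Im1 | exact: integ_Re1].
under eq_Rintegral do rewrite ImM.
rewrite RintegralD //; [|exact: integ_Im | exact: integ_Re].
by rewrite !RintegralZl //; [exact: integ_Re1 | exact: integ_Im1].
Qed.


Lemma good_add f g : good f -> good g -> good (fun w => f w + g w).
Proof.
move=> [mf [B hB]] [mg [B' hB']]; split; first exact: cmeasD.
exists (B + B') => w Cw; rewrite ReD ImD.
have := ler_normD (complex.Re (f w)) (complex.Re (g w)).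
have := ler_normD (complex.Im (f w)) (complex.Im (g w)).
have := hB w Cw; have := hB' w Cw; lra.
Qed.

Lemma good_scale c f : good f -> good (fun w => c * f w).
Proof.
move=> [mf [B hB]]; split; first by apply: cmeasM => //; exact: cmeas_cst.
exists ((`|complex.Re c| + `|complex.Im c|) * B) => w Cw; rewrite ReM ImM.
set a := complex.Re c; set b := complex.Im c.
set x := complex.Re (f w); set y := complex.Im (f w).
have h1 : `|a * x - b * y| <= `|a| * `|x| + `|b| * `|y|.
  by rewrite -!normrM; apply: le_trans (ler_normB _ _) _.
have h2 : `|a * y + b * x| <= `|a| * `|y| + `|b| * `|x|.
  by rewrite -!normrM; apply: le_trans (ler_normD _ _) _.
have := hB w Cw; rewrite -/x -/y => h3.
have := normr_ge0 a; have := normr_ge0 b; have := normr_ge0 x; have := normr_ge0 y.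
nra.
Qed.

Lemma good0 : good (fun _ => 0).
Proof. split; first exact: cmeas_cst. by exists 0 => w _ /=; rewrite normr0 addr0. Qed.

Lemma good_sum d (F : 'I_d -> (R * R)%type -> R[i]) : (forall i, good (F i)) ->
  good (fun w => \sum_(i < d) F i w).
Proof.
move=> hF; elim: d F hF => [|d IH] F hF.
  by under eq_fun do rewrite big_ord0; exact: good0.
under eq_fun do rewrite big_ord_recr /=.
apply: good_add => //; exact: (IH (fun i => F (widen_ord (leqnSn d) i))).
Qed.

Lemma cint0 : cintegral mu (fun _ => 0) = 0.
Proof.
rewrite -[RHS](mul0r (cintegral mu (fun _ => 0))) -cint_scale; last exact: good0.
by congr cintegral; apply/funext => w; rewrite mul0r.
Qed.

Lemma cint_sum d (F : 'I_d -> (R * R)%type -> R[i]) : (forall i, good (F i)) ->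
  cintegral mu (fun w => \sum_(i < d) F i w) = \sum_(i < d) cintegral mu (F i).
Proof.
move=> hF; elim: d F hF => [|d IH] F hF.
  by rewrite big_ord0; under eq_fun do rewrite big_ord0; exact: cint0.
rewrite big_ord_recr /=; under eq_fun do rewrite big_ord_recr /=.
rewrite (cint_add (good_sum (F := fun i => F (widen_ord (leqnSn d) i)) (fun i => hF _)) (hF _)).
by rewrite (IH (fun i => F (widen_ord (leqnSn d) i))).
Qed.


Definition sq (z : R[i]) := complex.Re z ^+ 2 + complex.Im z ^+ 2.

Lemma sqM x y : sq (x * y) = sq x * sq y.
Proof. by rewrite /sq ReM ImM; ring. Qed.

Lemma sqV1 x : sq x = 1 -> sq (x^-1) = 1.
Proof. by rewrite /sq ReV ImV => h; rewrite h !divr1 sqrrN. Qed.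

Lemma sqX x n : sq x = 1 -> sq (x ^+ n) = 1.
Proof.
move=> h; elim: n => [|n IH]; first by rewrite expr0 /sq /= expr1n expr0n addr0.
by rewrite exprS sqM h IH mulr1.
Qed.

Lemma sqXz x (k : int) : sq x = 1 -> sq (x ^ k) = 1.
Proof. by move=> h; case: k => n; [exact: sqX | apply: sqV1; exact: sqX]. Qed.

Lemma sq_bound z : sq z = 1 -> `|complex.Re z| + `|complex.Im z| <= 2.
Proof.
rewrite /sq -(real_normK (num_real (complex.Re z))) -(real_normK (num_real (complex.Im z))).
move=> h; have := sqr_ge0 (`|complex.Re z| - 1); have := sqr_ge0 (`|complex.Im z| - 1).
move: h; set u := `|complex.Re z|; set v := `|complex.Im z|; nra.
Qed.

Lemma sq_toC (w : (R * R)%type) : unit_circle w -> sq (toC w) = 1.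
Proof. by []. Qed.

Lemma toC_unit (w : (R * R)%type) : unit_circle w -> toC w \is a GRing.unit.
Proof.
move=> Cw; rewrite unitfE; apply/eqP => h.
by have := sq_toC Cw; rewrite h /sq /= expr0n /= addr0 => /eqP; rewrite eq_sym oner_eq0.
Qed.

Lemma good_powz (t : int) : good (fun w => toC w ^ t).
Proof.
split; first exact: cmeasXz cmeas_toC.
by exists 2 => w Cw; apply: sq_bound; apply: sqXz; exact: sq_toC.
Qed.

Lemma good_pow (a : int) (i : nat) (b : int) :
  good (fun w => toC w ^ a * toC w ^+ i * toC w ^ b).
Proof.
split.
  apply: cmeasM; [apply: cmeasM|]; [exact: cmeasXz cmeas_toC | exact: cmeasX cmeas_toC |
     exact: cmeasXz cmeas_toC].
exists 2 => w Cw; apply: sq_bound; have h := sq_toC Cw.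
by rewrite !sqM sqXz // sqX // sqXz // !mulr1.
Qed.

Definition mom (t : int) := cintegral mu (fun w => toC w ^ t).

Lemma moment (a b : int) (P : {poly R[i]}) (d : nat) : (size P <= d)%N ->
  cintegral mu (fun w => lpoly a P (toC w) * toC w ^ b) =
  \sum_(i < d) P`_i * mom (a + i%:Z + b).
Proof.
move=> hP.
have -> : (fun w => lpoly a P (toC w) * toC w ^ b) =
    (fun w => \sum_(i < d) P`_i * (toC w ^ a * toC w ^+ i * toC w ^ b)).
  apply/funext => w; rewrite /lpoly (horner_coef_wide _ hP) mulr_sumr mulr_suml.
  by apply: eq_bigr => i _; ring.
rewrite cint_sum; last by move=> i; apply: good_scale; exact: good_pow.
apply: eq_bigr => i _; rewrite cint_scale; last exact: good_pow.
congr (_ * _); apply: cint_circ; [exact: good_pow | exact: good_powz |].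
move=> w Cw; have u := toC_unit Cw.
by rewrite !exprzDr.
Qed.

End Int.
End Meas.



Lemma card_T (r : nat) (n m : 'I_r -> nat) :
  #|{: {j : 'I_r & 'I_(n j + m j)}}| = (sumn_vec m + sumn_vec n)%N.
Proof.
rewrite card_tagged sumnE big_map.
under eq_bigr do rewrite card_ord.
rewrite big_enum /= big_split /= addnC //.
Qed.

Lemma T_iff1 (r : nat) (n m : 'I_r -> nat) (Q : 'I_r -> int -> Prop) :
  (forall j (p : int), - (m j)%:Z <= p <= (n j)%:Z - 1 -> Q j p) <->
  (forall t : {j : 'I_r & 'I_(n j + m j)}, Q (tag t) ((tagged t : nat)%:Z - (m (tag t))%:Z)).
Proof.
split.
  move=> H [j k] /=; apply: H; have := ltn_ord k; lia.
move=> H j p hp.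
have hk : (absz (p + (m j)%:Z)%R < n j + m j)%N by lia.
have := H (Tagged (fun j => 'I_(n j + m j)) (Ordinal hk)) => /=.
have -> : ((absz (p + (m j)%:Z))%:Z - (m j)%:Z) = p by lia.
by [].
Qed.

Lemma T_iff2 (r : nat) (n m : 'I_r -> nat) (Q : 'I_r -> int -> Prop) :
  (forall j (p : int), - (m j)%:Z + 1 <= p <= (n j)%:Z -> Q j p) <->
  (forall t : {j : 'I_r & 'I_(n j + m j)}, Q (tag t) ((tagged t : nat)%:Z - (m (tag t))%:Z + 1)).
Proof.
split.
  move=> H [j k] /=; apply: H; have := ltn_ord k; lia.
move=> H j p hp.
have hk : (absz (p - 1 + (m j)%:Z)%R < n j + m j)%N by lia.
have := H (Tagged (fun j => 'I_(n j + m j)) (Ordinal hk)) => /=.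
have -> : ((absz (p - 1 + (m j)%:Z))%:Z - (m j)%:Z + 1) = p by lia.
by [].
Qed.

Section Lgen.
Variables (F : fieldType) (T : Type) (d : nat) (c : nat -> T -> F).
Definition Lg (t : T) (P : {poly F}) := \sum_(i < d) P`_i * c i t.
Lemma LgD t P Q : Lg t (P + Q) = Lg t P + Lg t Q.
Proof. by rewrite /Lg -big_split; apply: eq_bigr => i _; rewrite coefD mulrDl. Qed.
Lemma LgZ t a P : Lg t (a *: P) = a * Lg t P.
Proof. by rewrite /Lg mulr_sumr; apply: eq_bigr => i _; rewrite coefZ mulrA. Qed.
End Lgen.

Lemma emb0 (F : fieldType) K : @emb F K 0 = 0.
Proof. by rewrite /emb big1 // => i _; rewrite mxE scale0r. Qed.

Unset Implicit Arguments.
Set Strict Implicit.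

Theorem proposition2p8 (R : realType) (r : nat)
  (mu : 'I_r -> {measure set (R * R)%type -> \bar R})
  (hfin : forall j, (mu j setT < +oo)%E)
  (hcirc : forall j, on_circle (mu j))
  (hsupp : forall j, ~ finite_set (msupport (mu j)))
  (n m : 'I_r -> nat) :
  let N := sumn_vec n in
  let M := sumn_vec m in
  [/\ (* (a) <-> (b) *)
      (exists! P : {poly R[i]},
          [/\ (size P <= M + N + 1)%N, P`_(M + N) = 1
            & orth_typeI mu n m (lpoly (- M%:Z) P)]) <->
      (forall P : {poly R[i]}, (size P <= M + N)%N ->
          orth_typeI mu n m (lpoly (- M%:Z) P) -> P = 0),
      (* (a) <-> (c) *)
      (exists! P : {poly R[i]},
          [/\ (size P <= M + N + 1)%N, P`_(M + N) = 1
            & orth_typeI mu n m (lpoly (- M%:Z) P)]) <->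
      (exists! P : {poly R[i]},
          [/\ (size P <= M + N + 1)%N, P`_0 = 1
            & orth_typeII mu n m (lpoly (- M%:Z) P)])
    & (* (a) <-> (d) *)
      (exists! P : {poly R[i]},
          [/\ (size P <= M + N + 1)%N, P`_(M + N) = 1
            & orth_typeI mu n m (lpoly (- M%:Z) P)]) <->
      (forall P : {poly R[i]}, (size P <= M + N)%N ->
          orth_typeII mu n m (lpoly (1 - M%:Z) P) -> P = 0)].
Proof.
move=> N M.
pose T := {j : 'I_r & 'I_(n j + m j)}.
have hT : #|{: T}| = (M + N)%N by exact: card_T.
pose pI (t : T) : int := (tagged t : nat)%:Z - (m (tag t))%:Z.
pose cI i (t : T) := mom (mu (tag t)) (- M%:Z + i%:Z + - pI t).
pose cII i (t : T) := mom (mu (tag t)) (- M%:Z + i%:Z + - (pI t + 1)).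
pose LI := Lg (M + N + 1)%N cI.
pose LII := Lg (M + N + 1)%N cII.
have I1 (P : {poly R[i]}) : (size P <= M + N + 1)%N ->
    orth_typeI mu n m (lpoly (- M%:Z) P) <-> forall t, LI t P = 0.
  move=> hP; rewrite /orth_typeI.
  have := T_iff1 n m (fun j p => cintegral (mu j) (fun w => lpoly (- M%:Z) P (toC w) * toC w ^ (- p)) = 0).
  move=> ->; split => H t; move: (H t); rewrite (moment (hfin _) (hcirc _) _ _ hP) //.
have I2 (P : {poly R[i]}) : (size P <= M + N + 1)%N ->
    orth_typeII mu n m (lpoly (- M%:Z) P) <-> forall t, LII t P = 0.
  move=> hP; rewrite /orth_typeII.
  have := T_iff2 n m (fun j p => cintegral (mu j) (fun w => lpoly (- M%:Z) P (toC w) * toC w ^ (- p)) = 0).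
  move=> ->; split => H t; move: (H t); rewrite (moment (hfin _) (hcirc _) _ _ hP) //.
have I3 (P : {poly R[i]}) : (size P <= M + N + 1)%N ->
    orth_typeII mu n m (lpoly (1 - M%:Z) P) <-> forall t, LI t P = 0.
  move=> hP; rewrite /orth_typeII.
  have := T_iff2 n m (fun j p => cintegral (mu j) (fun w => lpoly (1 - M%:Z) P (toC w) * toC w ^ (- p)) = 0).
  move=> ->.
  have e (t : T) : cintegral (mu (tag t)) (fun w => lpoly (1 - M%:Z) P (toC w) *
      toC w ^ (- ((tagged t : nat)%:Z - (m (tag t))%:Z + 1))) = LI t P.
    rewrite (moment (hfin _) (hcirc _) _ _ hP); apply: eq_bigr => i _.
    by rewrite /cI /pI; congr (_ * mom _ _); ring.
  by split => H t; move: (H t); rewrite e.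
have hle (P : {poly R[i]}) : (size P <= M + N)%N -> (size P <= M + N + 1)%N.
  by move=> h; rewrite (leq_trans h) // leq_addr.
pose RB := forall x : 'rV[R[i]]_(M + N), (forall t, LI t (emb x) = 0) -> x = 0.
have hA : (exists! P : {poly R[i]},
          [/\ (size P <= M + N + 1)%N, P`_(M + N) = 1
            & orth_typeI mu n m (lpoly (- M%:Z) P)]) <-> RB.
  rewrite (@ex1_iff _ _ (fun P : {poly R[i]} => [/\ (size P <= M + N + 1)%N, P`_(M + N) = 1
            & forall t, LI t P = 0])); last first.
    by move=> P; split => [[a b c]|[a b c]]; split => //; apply/(I1 P a).
  exact: (LA_top hT (LgD _ cI) (LgZ _ cI)).
have hB : (forall P : {poly R[i]}, (size P <= M + N)%N ->
          orth_typeI mu n m (lpoly (- M%:Z) P) -> P = 0) <-> RB.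
  split.
  - move=> H x hx; apply: emb_inj; apply: H; first exact: emb_size.
    by apply/I1; [exact: hle (emb_size x) | exact: hx].
  - move=> H P hP ho; rewrite -(emb_row hP) (H (\row_i P`_i)) ?emb0 //.
    by rewrite emb_row //; apply/I1 => //; exact: hle.
have hD : (forall P : {poly R[i]}, (size P <= M + N)%N ->
          orth_typeII mu n m (lpoly (1 - M%:Z) P) -> P = 0) <-> RB.
  split.
  - move=> H x hx; apply: emb_inj; apply: H; first exact: emb_size.
    by apply/I3; [exact: hle (emb_size x) | exact: hx].
  - move=> H P hP ho; rewrite -(emb_row hP) (H (\row_i P`_i)) ?emb0 //.
    by rewrite emb_row //; apply/I3 => //; exact: hle.
have sh (Q : {poly R[i]}) t : (size Q <= M + N)%N -> LII t (Q * 'X) = LI t Q.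
  move=> hQ; rewrite /LII /LI /Lg addn1 [LHS]big_ord_recl [RHS]big_ord_recr /=.
  rewrite coefMX eqxx mul0r add0r (nth_default _ hQ) mul0r addr0.
  apply: eq_bigr => i _; rewrite coefMX /=; congr (_ * _).
  by rewrite /cII /cI; congr mom; rewrite intS; ring.
have hC : (exists! P : {poly R[i]},
          [/\ (size P <= M + N + 1)%N, P`_0 = 1
            & orth_typeII mu n m (lpoly (- M%:Z) P)]) <-> RB.
  rewrite (@ex1_iff _ _ (fun P : {poly R[i]} => [/\ (size P <= M + N + 1)%N, P`_0 = 1
            & forall t, LII t P = 0])); last first.
    by move=> P; split => [[a b c]|[a b c]]; split => //; apply/(I2 P a).
  apply: iff_trans (@LA_bot _ _ _ hT LII (LgD _ cII) (LgZ _ cII)) _.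
  by split => H x hx; apply: H => t; [rewrite sh ?emb_size // | rewrite -sh ?emb_size //]; exact: hx.
split.
- exact: iff_trans hA (iff_sym hB).
- exact: iff_trans hA (iff_sym hC).
- exact: iff_trans hA (iff_sym hD).
Qed.
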